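(* Let $F$ be a Legendre function whose domain is a closed convex cone $\mathcal{K}\supseteq\mathbb{R}^d_{\ge0}$ with $\mathrm{int}(\mathcal{K})\supseteq\mathbb{R}^d_{++}$, and assume that for any $p,q\in\mathcal{K}$ and weights $\lambda_1,\lambda_2>0$, the point $c^*$ defined by $\nabla F(c^* )=\frac{\lambda_1\nabla F(p)+\lambda_2\nabla F(q)}{\lambda_1+\lambda_2}$ lies in $\mathcal{K}$. Then for any $\pi_0\in\Pi_{\mathrm{all}}$, the direct projection $\widehat\pi=\arg\min_{\pi\in\Pi\cap\mathcal{C}_{\mathrm{coh}}}\mathsf{B}(\pi\parallel\pi_0)$ coincides with the two-step projection $\widehat{\widehat\pi}=\arg\min_{\pi\in\Pi\cap\mathcal{C}_{\mathrm{coh}}}\mathsf{B}(\pi\parallel\overline\pi)$, where $\overline\pi=\arg\min_{\pi\in\mathcal{C}^\dagger_{\mathrm{coh}}}\mathsf{B}(\pi\parallel\pi_0)$.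
   Context: $\mathcal{X},\mathcal{Y}$ finite, $d=|\mathcal{Y}|$; $\Pi_{\mathrm{all}}=\Delta(\mathcal{Y})^{\mathcal{X}}$; $\Pi\subseteq\Pi_{\mathrm{all}}$ closed convex; $\Pi^\dagger_{\mathrm{all}}=\mathcal{K}^{\mathcal{X}}$. $\mathcal{D}_{\mathcal{X}}$ a full-support distribution on $\mathcal{X}$; $\Phi\colon\mathcal{X}\to\mathcal{X}$ an involution; $\mathcal{C}^{\dagger\dagger}_{\mathrm{coh}}=\{\pi\colon\mathcal{X}\to\mathbb{R}^d:\pi(x)=\pi(\Phi(x))\ \forall x\}$, $\mathcal{C}^\dagger_{\mathrm{coh}}=\mathcal{C}^{\dagger\dagger}_{\mathrm{coh}}\cap\Pi^\dagger_{\mathrm{all}}$, $\mathcal{C}_{\mathrm{coh}}=\mathcal{C}^\dagger_{\mathrm{coh}}\cap\Pi_{\mathrm{all}}$. For models, $\mathsf{B}(\pi\parallel\pi')=\mathbb{E}_{x\sim\mathcal{D}_{\mathcal{X}}}[\mathsf{B}_F(\pi(x)\parallel\pi'(x))]$ with $\mathsf{B}_F(p\parallel q)=F(p)-F(q)-\langle\nabla F(q),p-q\rangle$. A Legendre function is proper, closed, convex, differentiable on the interior $\Omega$ of its domain, with $\nabla F\colon\Omega\to\mathrm{int}(\mathrm{dom}F^* )$ a bijection. *)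

(* Defs.v *)
From HB Require Import structures.
From mathcomp Require Import all_boot all_order all_algebra.
From mathcomp Require Import all_classical all_reals all_analysis.
Set Implicit Arguments. Unset Strict Implicit. Unset Printing Implicit Defensive.
Import Order.TTheory GRing.Theory Num.Theory.
Import numFieldNormedType.Exports.
Local Open Scope classical_set_scope.
Local Open Scope ring_scope.

Section Defs.
Variables (R : realType) (d : nat).
Notation V := 'rV[R]_d.

Definition inner (a b : V) : R := \sum_(i < d) a 0 i * b 0 i.

(* Gradient of F at q, as the row vector of partial derivatives
   (meaningful where F is differentiable). *)
Definition gradF (F : V -> R) (q : V) : V :=
  \row_(i < d) ('d F q : V -> R) (delta_mx 0 i).

Definition bregF (F : V -> R) (p q : V) : R :=
  F p - F q - inner (gradF F q) (p - q).

Definition convex_vset (K : set V) : Prop :=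
  forall x y (t : R), K x -> K y -> 0 <= t <= 1 -> K (t *: x + (1 - t) *: y).

Definition cone (K : set V) : Prop :=
  forall x (t : R), K x -> 0 <= t -> K (t *: x).

Definition nonneg_orthant : set V := [set x | forall i, 0 <= x 0 i].
Definition pos_orthant : set V := [set x | forall i, 0 < x 0 i].

(* Probability simplex Delta(Y), Y identified with 'I_d. *)
Definition simplex : set V :=
  [set x | (forall i, 0 <= x 0 i) /\ \sum_(i < d) x 0 i = 1].

(* A function F with effective domain K (F = +oo outside K). *)
Definition conj_dom (F : V -> R) (K : set V) : set V :=
  [set y | exists M : R, forall x, K x -> inner y x - F x <= M].

Definition Legendre (F : V -> R) (K : set V) : Prop :=
  [/\ K !=set0,
      convex_vset K /\
        (forall x y (t : R), K x -> K y -> 0 <= t <= 1 ->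
           F (t *: x + (1 - t) *: y) <= t * F x + (1 - t) * F y),
      closed [set z : V * R | K z.1 /\ F z.1 <= z.2],
      (forall x, interior K x -> differentiable F x) &
      set_bij (interior K) (interior (conj_dom F K)) (gradF F)].

Definition cstar_in_dom (F : V -> R) (K : set V) : Prop :=
  forall p q (l1 l2 : R), interior K p -> interior K q -> 0 < l1 -> 0 < l2 ->
    exists c, [/\ K c, differentiable F c &
      gradF F c = (l1 + l2)^-1 *: (l1 *: gradF F p + l2 *: gradF F q)].

Variable X : finType.
Local Notation model := (X -> V).

(* Closedness of a set of models, for the (pointwise = product = Euclidean,
   X being finite) topology on X -> R^d. *)
Definition closed_models (P : set model) : Prop :=
  closed (P : set {ptws X -> V}).

Definition convex_models (P : set model) : Prop :=
  forall f g (t : R), P f -> P g -> 0 <= t <= 1 ->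
    P (fun x => t *: f x + (1 - t) *: g x).

Definition Pi_all : set model := [set pi | forall x, simplex (pi x)].
Definition Pi_dag_all (K : set V) : set model := [set pi | forall x, K (pi x)].
Definition C_coh_dd (Phi : X -> X) : set model :=
  [set pi | forall x, pi x = pi (Phi x)].
Definition C_coh_d (Phi : X -> X) (K : set V) : set model :=
  C_coh_dd Phi `&` Pi_dag_all K.
Definition C_coh (Phi : X -> X) (K : set V) : set model :=
  C_coh_d Phi K `&` Pi_all.

(* B(pi || pi') = E_{x ~ D_X} B_F(pi x || pi' x), D_X given by weights w. *)
Definition Bdiv (w : X -> R) (F : V -> R) (pi pi' : model) : R :=
  \sum_(x : X) w x * bregF F (pi x) (pi' x).

Definition is_argmin (S : set model) (f : model -> R) (m : model) : Prop :=
  S m /\ forall pi, S pi -> f m <= f pi.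

Definition argmin (S : set model) (f : model -> R) : set model :=
  [set m | is_argmin S f m].

End Defs.

(* Main.v *)
Require Import Defs.
From HB Require Import structures.
From mathcomp Require Import all_boot all_order all_algebra.
From mathcomp Require Import all_classical all_reals all_analysis.
From mathcomp Require Import ring lra.
Set Implicit Arguments. Unset Strict Implicit.
Import Order.TTheory GRing.Theory Num.Theory.
Import numFieldNormedType.Exports.
Local Open Scope classical_set_scope.
Local Open Scope ring_scope.

Section S.
Variables (R : realType) (d : nat).
Notation V := 'rV[R]_d.

Lemma dq_cvg (F : V -> R) z v : differentiable F z ->
  (fun h : R => h^-1 *: (F (h *: v + z) - F z)) @ 0^'+ --> 'd F z v.
Proof.
move=> dF; rewrite -deriveE //.
have Hd := @diff_derivable _ _ _ F z v dF; apply: (cvg_trans _ Hd).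
apply: cvg_app.
move=> P [e e0 H]; exists e => // y /= ye y0; apply: H => //=.
by rewrite gt_eqF.
Qed.

Lemma dir_ge (F : V -> R) z v a : differentiable F z ->
  (exists2 del : R, 0 < del & forall s, 0 < s < del -> a <= s^-1 * (F (s *: v + z) - F z)) ->
  a <= 'd F z v.
Proof.
move=> dF [del del0 H]; apply: (@cvgr_to_ge _ (0:R)^'+ _ _ (fun h : R => h^-1 *: (F (h *: v + z) - F z))); first exact: dq_cvg.
exists del => //= y /= yd y0; apply: H; rewrite y0 /=.
by move: yd; rewrite /= sub0r normrN gtr0_norm.
Qed.

Lemma dir_le (F : V -> R) z v a : differentiable F z ->
  (exists2 del : R, 0 < del & forall s, 0 < s < del -> s^-1 * (F (s *: v + z) - F z) <= a) ->
  'd F z v <= a.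
Proof.
move=> dF [del del0 H]; apply: (@cvgr_to_le _ (0:R)^'+ _ _ (fun h : R => h^-1 *: (F (h *: v + z) - F z))); first exact: dq_cvg.
exists del => //= y /= yd y0; apply: H; rewrite y0 /=.
by move: yd; rewrite /= sub0r normrN gtr0_norm.
Qed.

Lemma int_ball (K : set V) c : interior K c ->
  exists2 e : R, 0 < e & forall y : V, `|y - c| < e -> K y.
Proof.
rewrite /interior => /nbhs_ballP [e e0 H]; exists e => // y yc; apply: H.
by rewrite -ball_normE /= distrC.
Qed.

Lemma ball_int (K : set V) c :
  (exists2 e : R, 0 < e & forall y : V, `|y - c| < e -> K y) -> interior K c.
Proof.
move=> [e e0 H]; rewrite /interior; apply/nbhs_ballP; exists e => // y.
by rewrite -ball_normE /= distrC => /H.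
Qed.

Lemma inner_gradF (F : V -> R) z v : inner (gradF F z) v = 'd F z v.
Proof.
rewrite [in RHS](row_sum_delta v) linear_sum /inner; apply: eq_bigr => i _.
by rewrite linearZ /= mxE mulrC.
Qed.

Lemma inner_delta (g : V) i : inner g (delta_mx 0 i) = g 0 i.
Proof.
rewrite /inner (bigD1 i) //= big1 ?addr0; first by rewrite mxE !eqxx mulr1.
by move=> j ji; rewrite mxE; case: eqP => //= _; case: eqP => [ij|]; [by rewrite ij eqxx in ji | rewrite mulr0].
Qed.

Lemma gradF_eq (F : V -> R) z g : (forall v, 'd F z v = inner g v) -> gradF F z = g.
Proof. by move=> H; apply/rowP => i; rewrite mxE H inner_delta. Qed.

Lemma innerDl (a b c : V) : inner (a + b) c = inner a c + inner b c.
Proof. by rewrite /inner -big_split; apply: eq_bigr => i _; rewrite mxE mulrDl. Qed.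
Lemma innerDr (a b c : V) : inner c (a + b) = inner c a + inner c b.
Proof. by rewrite /inner -big_split; apply: eq_bigr => i _; rewrite mxE mulrDr. Qed.
Lemma innerZl (t : R) (a c : V) : inner (t *: a) c = t * inner a c.
Proof. by rewrite /inner mulr_sumr; apply: eq_bigr => i _; rewrite mxE mulrA. Qed.
Lemma innerZr (t : R) (a c : V) : inner c (t *: a) = t * inner c a.
Proof. by rewrite /inner mulr_sumr; apply: eq_bigr => i _; rewrite mxE mulrCA. Qed.
Lemma innerNr (a c : V) : inner c (- a) = - inner c a.
Proof. by rewrite -scaleN1r innerZr mulN1r. Qed.
Lemma innerBr (a b c : V) : inner c (a - b) = inner c a - inner c b.
Proof. by rewrite innerDr innerNr. Qed.
Lemma innerBl (a b c : V) : inner (a - b) c = inner a c - inner b c.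
Proof. by rewrite innerDl -scaleN1r innerZl mulN1r. Qed.

Definition convF (K : set V) (F : V -> R) := forall x y (t : R), K x -> K y -> 0 <= t <= 1 ->
           F (t *: x + (1 - t) *: y) <= t * F x + (1 - t) * F y.

Lemma subgrad (K : set V) F c y : convF K F -> K c -> K y -> differentiable F c ->
  inner (gradF F c) (y - c) <= F y - F c.
Proof.
move=> cF Kc Ky dF; rewrite inner_gradF; apply: dir_le => //.
exists 1 => // s /andP [s0 s1].
have -> : s *: (y - c) + c = s *: y + (1 - s) *: c.
  by rewrite scalerBr scalerBl scale1r -addrA [c - _]addrC.
have H : F (s *: y + (1 - s) *: c) <= s * F y + (1 - s) * F c by apply: cF => //; rewrite !ltW.
rewrite -(ler_pM2l s0) mulrA mulfV ?gt_eqF // mul1r.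
by rewrite lerBlDr (le_trans H) // mulrBr mulrBl mul1r addrA addrAC.
Qed.

Lemma fermat (K : set V) F c g : interior K c -> differentiable F c ->
  (forall y, K y -> F c - inner g c <= F y - inner g y) -> gradF F c = g.
Proof.
move=> /int_ball [e e0 He] dF H; apply: gradF_eq.
suff ge : forall v, inner g v <= 'd F c v.
  move=> v; apply/eqP; rewrite eq_le ge andbT.
  by have := ge (- v); rewrite linearN innerNr lerN2.
move=> v; apply: dir_ge => //.
exists (e / (`|v| + 1)); first by rewrite divr_gt0 // ltr_pwDr.
move=> s /andP [s0 sl].
have Ks : K (s *: v + c).
  apply: He; rewrite addrK normrZ gtr0_norm //.
  rewrite (@le_lt_trans _ _ (s * (`|v| + 1))) //; first by rewrite ler_pM2l // lerDl.
  by rewrite -ltr_pdivlMr // ltr_pwDr.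
have := H _ Ks; rewrite innerDr -(ler_pM2l s0) mulrA mulfV ?gt_eqF // mul1r innerZr.
by move=> h; lra.
Qed.

Lemma minimal (K : set V) F c g y : convF K F -> K c -> K y -> differentiable F c ->
  gradF F c = g -> F c - inner g c <= F y - inner g y.
Proof.
move=> cF Kc Ky dF gc; have := subgrad cF Kc Ky dF; rewrite gc innerBr => h; lra.
Qed.

Lemma uniq_min (K : set V) F c g y : convF K F -> interior K c ->
  (forall x, interior K x -> differentiable F x) ->
  (forall a b : V, interior K a -> interior K b -> gradF F a = gradF F b -> a = b) ->
  gradF F c = g -> K y -> F y - inner g y <= F c - inner g c -> y = c.
Proof.
move=> cF Ic dK inj gc Ky hy.
have Kc : K c by apply: interior_subset.
have [e e0 He] := int_ball Ic.
set t := (e / 2) / (`|y - c| + e).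
have yce : 0 < `|y - c| + e by rewrite ltr_pwDr.
have e2 : 0 < e / 2 by rewrite divr_gt0.
have t0 : 0 < t by rewrite divr_gt0.
have t1 : t <= 1.
  rewrite ler_pdivrMr // mul1r ler_wpDl // ler_pdivrMr // ler_pMr // ?ler1n //.
have tb : t * `|y - c| <= e / 2.
  by rewrite /t mulrAC ler_pdivrMr // ler_pM2l // lerDl ltW.
set z := t *: y + (1 - t) *: c.
have zc : z - c = t *: (y - c).
  by rewrite /z scalerBl scale1r scalerBr addrA [_ + c - _]addrAC addrK.
have Iz : interior K z.
  apply: ball_int; exists (e / 2); first by rewrite divr_gt0.
  move=> u uz; apply: He; rewrite -(subrK z u) -addrA zc.
  rewrite (le_lt_trans (ler_normD _ _)) // normrZ gtr0_norm //.
  by rewrite [e in _ < e](splitr e) (ltr_leD uz tb).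
have Kz : K z by apply: interior_subset.
have hz : F z - inner g z <= F c - inner g c.
  have := cF y c t Ky Kc; rewrite (ltW t0) t1 => /(_ isT) Fz.
  rewrite /z innerDr !innerZr.
  have hc : 0 <= 1 - t by rewrite subr_ge0.
  have := ler_wpM2l (ltW t0) hy; have := ler_wpM2l hc (lexx (F c - inner g c)).
  move=> h1 h2; lra.
have gz : gradF F z = g.
  apply: fermat Iz (dK _ Iz) _ => y' Ky'.
  apply: (le_trans hz); exact: (minimal cF Kc Ky' (dK _ Ic) gc).
have zc' : z = c by apply: (inj z c Iz Ic); rewrite gz gc.
have zc0 : t *: (y - c) = 0 by rewrite -zc zc' subrr.
by move/eqP: zc0; rewrite scaler_eq0 (gt_eqF t0) /= subr_eq0 => /eqP.
Qed.

Lemma conj_convex (F : V -> R) (K : set V) : convex_vset (conj_dom F K).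
Proof.
move=> a b t [Ma Ha] [Mb Hb] /andP [t0 t1]; exists (t * Ma + (1 - t) * Mb) => x Kx.
have h1 := ler_wpM2l t0 (Ha x Kx).
have h2 : (1 - t) * (inner b x - F x) <= (1 - t) * Mb.
  by apply: (ler_wpM2l _ (Hb x Kx)); rewrite subr_ge0.
rewrite innerDl !innerZl; lra.
Qed.

Lemma int_convex (S : set V) : convex_vset S -> convex_vset (interior S).
Proof.
move=> cS a b t /int_ball [ea ea0 Ha] /int_ball [eb eb0 Hb] t01.
apply: ball_int; exists (Num.min ea eb); first by rewrite lt_min ea0 eb0.
move=> u; set m := t *: a + (1 - t) *: b => um.
have E : forall dl : V, t *: (a + dl) + (1 - t) *: (b + dl) = m + dl.
  move=> dl; rewrite !scalerDr addrACA -scalerDl [t + _]addrC subrK scale1r //.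
have -> : u = t *: (a + (u - m)) + (1 - t) *: (b + (u - m)) by rewrite E addrC subrK.
apply: cS => //.
  by apply: Ha; rewrite addrC addKr (lt_le_trans um) // ge_min lexx.
by apply: Hb; rewrite addrC addKr (lt_le_trans um) // ge_min lexx orbT.
Qed.
End S.

Lemma argmin_shift (R : realType) d (X : finType) (S : set (X -> 'rV[R]_d)) f1 f2 (C : R) :
  (forall p, S p -> f1 p = f2 p + C) -> argmin S f1 = argmin S f2.
Proof.
move=> E; apply/seteqP; split => m [Sm H]; split => // p Sp; have := H p Sp;
  rewrite !E // lerD2r //.
Qed.


Section H.
Variables (R : realType) (d : nat) (X : finType).
Notation V := 'rV[R]_d.

Lemma E_lem (w : X -> R) (f : V -> R) (gr : X -> V) (p q : X -> V) :
  \sum_x w x * (f (p x) - f (q x) - inner (gr x) (p x - q x)) =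
  \sum_x w x * f (p x) - \sum_x w x * inner (gr x) (p x) +
  \sum_x w x * (inner (gr x) (q x) - f (q x)).
Proof.
rewrite -sumrB -big_split /=; apply: eq_bigr => x _.
rewrite innerBr; ring.
Qed.

Lemma KF_lem (Phi : X -> X) (w : X -> R) (G : X -> V) (p : X -> V) :
  involutive Phi -> (forall x, w x + w (Phi x) != 0) -> (forall x, p x = p (Phi x)) ->
  \sum_x w x * inner (G x) (p x) =
  \sum_x w x * inner ((w x + w (Phi x))^-1 *: (w x *: G x + w (Phi x) *: G (Phi x))) (p x).
Proof.
move=> invP wn Hp.
set g := fun x => (w x + w (Phi x))^-1 *: (w x *: G x + w (Phi x) *: G (Phi x)).
have gP x : g (Phi x) = g x by rewrite /g invP addrC [w x *: _ + _]addrC.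
rewrite -/(\sum_x w x * inner (g x) (p x)).
set SG := \sum_x _; set Sg := \sum_x _.
have R1 : SG = \sum_x w (Phi x) * inner (G (Phi x)) (p x).
  by rewrite /SG (reindex_inj (inv_inj invP)) /=; apply: eq_bigr => x _; rewrite -Hp.
have R2 : Sg = \sum_x w (Phi x) * inner (g x) (p x).
  by rewrite /Sg (reindex_inj (inv_inj invP)) /=; apply: eq_bigr => x _; rewrite -Hp gP.
have : SG + SG = Sg + Sg; last by move=> h; lra.
rewrite [X in _ + X = _]R1 [X in _ = _ + X]R2 /SG /Sg -!big_split; apply: eq_bigr => x _ /=.
by rewrite -mulrDl /g innerZl mulrA mulfV // mul1r innerDl !innerZl.
Qed.

Lemma pos_terms (w : X -> R) (a b : X -> R) :
  (forall x, 0 < w x) -> (forall x, b x <= a x) ->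
  \sum_x w x * a x - \sum_x w x * b x <= 0 -> forall x, a x = b x.
Proof.
move=> w0 ba; rewrite -sumrB => Hs.
have Hnn : forall i, true -> 0 <= w i * a i - w i * b i.
  by move=> i _; rewrite -mulrBr; apply: mulr_ge0; [exact: ltW | rewrite subr_ge0 ba].
have Hz : \sum_i (w i * a i - w i * b i) = 0.
  by apply/eqP; rewrite eq_le Hs sumr_ge0.
move=> x; have := @psumr_eq0P _ _ xpredT (fun i => w i * a i - w i * b i) Hnn Hz x isT; rewrite -mulrBr => /eqP.
by rewrite mulf_eq0 (gt_eqF (w0 x)) /= subr_eq0 => /eqP.
Qed.

Lemma sum_le (w : X -> R) (a b : X -> R) :
  (forall x, 0 < w x) -> (forall x, b x <= a x) ->
  \sum_x w x * b x <= \sum_x w x * a x.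
Proof. by move=> w0 ba; apply: ler_sum => x _; apply: ler_wpM2l; [exact: ltW | exact: ba]. Qed.

Lemma E2 (w : X -> R) (f : V -> R) (gr gr' : X -> V) (p q : X -> V) :
  (forall x, gr' x = gr x) ->
  \sum_x w x * (f (p x) - f (q x) - inner (gr' x) (p x - q x)) =
  \sum_x w x * (f (p x) - inner (gr x) (p x)) +
  \sum_x w x * (inner (gr x) (q x) - f (q x)).
Proof.
move=> H; have -> : gr' = gr by apply: funext.
rewrite -big_split /=; apply: eq_bigr => x _.
rewrite innerBr; ring.
Qed.

Lemma KF2 (Phi : X -> X) (w : X -> R) (f : V -> R) (G g : X -> V) (p : X -> V) :
  involutive Phi -> (forall x, w x + w (Phi x) != 0) ->
  (forall x, g x = (w x + w (Phi x))^-1 *: (w x *: G x + w (Phi x) *: G (Phi x))) ->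
  (forall x, p x = p (Phi x)) ->
  \sum_x w x * (f (p x) - inner (G x) (p x)) = \sum_x w x * (f (p x) - inner (g x) (p x)).
Proof.
move=> invP wn gE Hp.
have -> : g = fun x => (w x + w (Phi x))^-1 *: (w x *: G x + w (Phi x) *: G (Phi x)).
  by apply: funext.
rewrite (eq_bigr (fun x => w x * f (p x) - w x * inner (G x) (p x))); last first.
  by move=> x _; rewrite mulrBr.
rewrite [RHS](eq_bigr (fun x => w x * f (p x) - w x * inner ((w x + w (Phi x))^-1 *: (w x *: G x + w (Phi x) *: G (Phi x))) (p x))); last first.
  by move=> x _; rewrite mulrBr.
by rewrite !sumrB (KF_lem G invP wn Hp).
Qed.

Lemma comb_sym (a b : R) (u v : V) :
  (a + b)^-1 *: (a *: u + b *: v) = (b + a)^-1 *: (b *: v + a *: u).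
Proof. by rewrite addrC [b *: v + _]addrC. Qed.
Lemma one_minus (a b : R) : a + b != 0 -> 1 - a / (a + b) = b / (a + b).
Proof. by move=> h; rewrite -[1](divff h) -mulrBl addrAC subrr add0r. Qed.
Lemma comb_conv (a b : R) (u v : V) : a + b != 0 ->
  (a + b)^-1 *: (a *: u + b *: v) = (a / (a + b)) *: u + (1 - a / (a + b)) *: v.
Proof. by move=> h; rewrite one_minus // scalerDr !scalerA !(mulrC _^-1). Qed.
Lemma frac01 (a b : R) : 0 < a -> 0 < b -> 0 <= a / (a + b) <= 1.
Proof.
move=> a0 b0; have ab : 0 < a + b by rewrite addr_gt0.
apply/andP; split; first by rewrite divr_ge0 // ltW.
by rewrite ler_pdivrMr // mul1r lerDl ltW.
Qed.
End H.

Unset Implicit Arguments. Set Strict Implicit.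
Theorem theorem13 (R : realType) (X : finType) (d : nat)
    (w : X -> R) (Phi : X -> X) (F : 'rV[R]_d -> R) (K : set 'rV[R]_d)
    (Pi : set (X -> 'rV[R]_d)) (pi0 : X -> 'rV[R]_d) :
  (forall x, 0 < w x) -> \sum_(x : X) w x = 1 ->
  involutive Phi ->
  closed K -> convex_vset K -> cone K ->
  @nonneg_orthant R d `<=` K -> @pos_orthant R d `<=` interior K ->
  Legendre F K -> cstar_in_dom F K ->
  closed_models Pi -> convex_models Pi -> Pi `<=` @Pi_all R d X ->
  @Pi_all R d X pi0 -> (forall x, interior K (pi0 x)) ->
  (exists pibar, is_argmin (C_coh_d Phi K) (fun pi => Bdiv w F pi pi0) pibar) /\
  (forall pibar, is_argmin (C_coh_d Phi K) (fun pi => Bdiv w F pi pi0) pibar ->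
     argmin (Pi `&` C_coh Phi K) (fun pi => Bdiv w F pi pi0) =
     argmin (Pi `&` C_coh Phi K) (fun pi => Bdiv w F pi pibar)).
Proof.
move=> w0 _ invP _ _ _ _ _ [_ [_ cF] _ dK [bfun binj bsurj]] _ _ _ _ _ Ipi0.
have cF' : convF K F by [].
have inj : forall a b, interior K a -> interior K b -> gradF F a = gradF F b -> a = b.
  by move=> a b Ia Ib; apply: binj; rewrite inE.
have wpos x : 0 < w x + w (Phi x) by rewrite addr_gt0.
have wn x : w x + w (Phi x) != 0 by rewrite gt_eqF.
have [G GE] : exists G : X -> 'rV[R]_d, forall x, gradF F (pi0 x) = G x by exists (fun x => gradF F (pi0 x)).
have GI x : interior (conj_dom F K) (G x) by rewrite -GE; exact: bfun.
have [g gE] : exists g : X -> 'rV[R]_d,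
    forall x, g x = (w x + w (Phi x))^-1 *: (w x *: G x + w (Phi x) *: G (Phi x)).
  by eexists => x; reflexivity.
have gP x : g (Phi x) = g x by rewrite !gE invP; exact: comb_sym.
have gI x : interior (conj_dom F K) (g x).
  rewrite gE comb_conv //; apply: int_convex; [exact: conj_convex | exact: GI | exact: GI |].
  exact: frac01.
have /choice [c Hc] : forall x, exists c, interior K c /\ gradF F c = g x.
  by move=> x; have [c Ic gc] := bsurj _ (gI x); exists c.
have cP x : c (Phi x) = c x.
  by apply: inj; [exact: (Hc _).1 | exact: (Hc _).1 | rewrite (Hc _).2 (Hc _).2 gP].
have E0 p : (forall x, p x = p (Phi x)) -> Bdiv w F p pi0 =
    \sum_x w x * (F (p x) - inner (g x) (p x)) +
    \sum_x w x * (inner (G x) (pi0 x) - F (pi0 x)).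
  move=> Hp; have := @E2 R d X w F G (fun x => gradF F (pi0 x)) p pi0 GE.
  by rewrite (@KF2 R d X Phi w F G g p invP wn gE Hp).
have E1 p : Bdiv w F p c =
    \sum_x w x * (F (p x) - inner (g x) (p x)) +
    \sum_x w x * (inner (g x) (c x) - F (c x)).
  exact: (@E2 R d X w F g (fun x => gradF F (c x)) p c (fun x => (Hc x).2)).
have hmin x y : K y -> F (c x) - inner (g x) (c x) <= F y - inner (g x) y.
  move=> Ky; exact: (minimal cF' (interior_subset (Hc x).1) Ky (dK _ (Hc x).1) (Hc x).2).
have cohc : forall x, c x = c (Phi x) by move=> x; rewrite cP.
have Cc : C_coh_d Phi K c.
  by split; [exact: cohc | move=> x; apply: interior_subset; exact: (Hc x).1].
have cmin : is_argmin (C_coh_d Phi K) (fun pi => Bdiv w F pi pi0) c.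
  split => // p [Hp Kp]; rewrite (E0 _ cohc) (E0 _ Hp) lerD2r.
  by apply: sum_le => // x; apply: hmin.
split; first by exists c.
move=> pb [[Hpb Kpb] Hm].
have pbc : pb = c.
  apply: funext => x.
  have := Hm c Cc; rewrite (E0 _ cohc) (E0 _ Hpb) lerD2r -subr_le0.
  move=> /(pos_terms w0 (fun x => hmin x _ (Kpb x))) /(_ x) hx.
  apply: (uniq_min cF' (Hc x).1 dK inj (Hc x).2 (Kpb x)); rewrite hx lexx //.
rewrite pbc; apply: (argmin_shift (C := \sum_x w x * (inner (G x) (pi0 x) - F (pi0 x)) -
    \sum_x w x * (inner (g x) (c x) - F (c x)))) => p [_ [[Hp _] _]].
rewrite (E0 _ Hp) (E1 p); lra.
Qed.
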